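(* Let $X_1,\ldots,X_n$ be nonnegative random variables with no ties. For every $A\subseteq[n]$ and $k\in[n]$, $$\Pr\Big(X_{k:n}=\min_{i\in A}X_i\Big)=\sum_{B\supseteq A,\ |B|=n-k+1}q(B)-\sum_{B\supseteq A,\ |B|=n-k}q(B),$$ and for any semicoherent structure function $\phi$ on $[n]$ with system lifetime $T$, and every $k\in\{0,\ldots,n\}$ (with $X_{0:n}:=0$... more precisely for $k\in[n]$), $$\Pr(T>X_{k:n})=\sum_{|A|=n-k}q(A)\,\phi(A)=\sum_{A\subseteq[n]}m_\phi(A)\,\Pr\Big(X_{k:n}<\min_{i\in A}X_i\Big).$$
   Context: No ties: $\Pr(X_i=X_k)=0$ for $i\neq k$. $X_{k:n}$ is the $k$th smallest of $X_1,\ldots,X_n$. For $A\subseteq[n]$, $q(A)=\Pr\big(\max_{i\notin A}X_i<\min_{i\in A}X_i\big)$ (empty max $=-\infty$, empty min $=+\infty$), the probability that the $|A|$ longest-lived components are exactly those in $A$. A semicoherent structure function $\phi:2^{[n]}\to\{0,1\}$ (subsets identified with Boolean vectors) is nondecreasing with $\phi(\varnothing)=0$, $\phi([n])=1$; the system lifetime is $T=\inf\{t\geq0:\phi(\{i:X_i>t\})=0\}$. Möbius transform: $m_\phi(A)=\sum_{B\subseteq A}(-1)^{|A|-|B|}\phi(B)$. *)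

(* Defs.v *)
From Stdlib Require Import Reals.
From mathcomp Require Import all_boot.

Set Implicit Arguments.
Unset Strict Implicit.
Unset Printing Implicit Defensive.

Local Open Scope R_scope.

(* A (finitely additive) probability space: a Boolean algebra of events [ev]
   on [Omega] (events are predicates on Omega) and a probability [pr]. *)
Record probSpace (Omega : Type) := ProbSpace {
  ev : (Omega -> Prop) -> Prop;
  pr : (Omega -> Prop) -> R;
  ev_ext : forall E F : Omega -> Prop,
      (forall w, E w <-> F w) -> ev E -> ev F;
  ev_full : ev (fun _ => True);
  ev_compl : forall E, ev E -> ev (fun w => ~ E w);
  ev_inter : forall E F, ev E -> ev F -> ev (fun w => E w /\ F w);
  pr_ext : forall E F : Omega -> Prop,
      (forall w, E w <-> F w) -> pr E = pr F;
  pr_nonneg : forall E, ev E -> 0 <= pr E;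
  pr_full : pr (fun _ => True) = 1;
  pr_add : forall E F, ev E -> ev F -> (forall w, E w -> F w -> False) ->
      pr (fun w => E w \/ F w) = pr E + pr F
}.

Definition Rleb (x y : R) : bool := if Rle_dec x y then true else false.

(* k-th smallest of X_1(w), ..., X_n(w)  (k is 1-based: k in 1..n). *)
Definition ostat (n : nat) (Omega : Type) (X : 'I_n -> Omega -> R)
    (k : nat) (w : Omega) : R :=
  nth 0 (sort Rleb [seq X i w | i <- enum 'I_n]) k.-1.

(* Event: v = min_{i in A} X_i(w)   (empty min = +infinity, so false if A = set0). *)
Definition eq_minA (n : nat) (Omega : Type) (X : 'I_n -> Omega -> R)
    (A : {set 'I_n}) (v : R) (w : Omega) : Prop :=
  (exists i, i \in A /\ X i w = v) /\ (forall i, i \in A -> v <= X i w).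

(* Event: v < min_{i in A} X_i(w)   (true if A = set0). *)
Definition lt_minA (n : nat) (Omega : Type) (X : 'I_n -> Omega -> R)
    (A : {set 'I_n}) (v : R) (w : Omega) : Prop :=
  forall i, i \in A -> v < X i w.

Definition qA (n : nat) (Omega : Type) (P : probSpace Omega)
    (X : 'I_n -> Omega -> R) (A : {set 'I_n}) : R :=
  pr P (fun w => forall i j, i \notin A -> j \in A -> X i w < X j w).

Definition sumR (T : finType) (p : pred T) (F : T -> R) : R :=
  \big[Rplus/0]_(x | p x) F x.

Definition semicoherent (n : nat) (phi : {set 'I_n} -> bool) : Prop :=
  (forall A B : {set 'I_n}, A \subset B -> phi A -> phi B) /\
  phi set0 = false /\ phi setT = true.

Definition b2R (b : bool) : R := if b then 1 else 0.

Definition mobius (n : nat) (phi : {set 'I_n} -> bool) (A : {set 'I_n}) : R :=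
  sumR (fun B : {set 'I_n} => B \subset A)
       (fun B => (-1) ^ (#|A| - #|B|)%nat * b2R (phi B)).

Definition is_glb (S : R -> Prop) (m : R) : Prop :=
  (forall t, S t -> m <= t) /\ (forall m', (forall t, S t -> m' <= t) -> m' <= m).

Definition is_lifetime (n : nat) (Omega : Type) (phi : {set 'I_n} -> bool)
    (X : 'I_n -> Omega -> R) (T : Omega -> R) : Prop :=
  forall w, is_glb (fun t => 0 <= t /\ phi [set i | Rleb (X i w) t == false] = false)
                   (T w).

(* Main.v *)
Require Import Defs.
From Stdlib Require Import Reals Lra Classical.
From mathcomp Require Import all_boot.
From mathcomp Require Import Rstruct zify.
From HB Require Import structures.
Set Implicit Arguments. Unset Strict Implicit. Unset Printing Implicit Defensive.
Local Open Scope R_scope.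

HB.instance Definition _ := Monoid.isComLaw.Build R 0 Rplus (fun a b c => esym (Rplus_assoc a b c)) Rplus_comm Rplus_0_l.
HB.instance Definition _ := Monoid.isMulLaw.Build R 0 Rmult Rmult_0_l Rmult_0_r.
HB.instance Definition _ := Monoid.isAddLaw.Build R Rmult Rplus Rmult_plus_distr_r Rmult_plus_distr_l.

Section Prob.
Variables (Omega : Type) (P : probSpace Omega).

Lemma prE (F E : Omega -> Prop) : (forall w, E w <-> F w) -> pr P E = pr P F.
Proof. exact: pr_ext. Qed.

Lemma ev_empty : ev P (fun _ => False).
Proof. apply: (ev_ext _ (ev_compl (ev_full P))) => w; tauto. Qed.

Lemma ev_const (Q : Prop) : ev P (fun _ => Q).
Proof.
case: (classic Q) => HQ.
  by apply: (ev_ext _ (ev_full P)) => w; tauto.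
by apply: (ev_ext _ ev_empty) => w; tauto.
Qed.

Lemma ev_not E : ev P E -> ev P (fun w => ~ E w).
Proof. exact: ev_compl. Qed.

Lemma ev_and E F : ev P E -> ev P F -> ev P (fun w => E w /\ F w).
Proof. exact: ev_inter. Qed.

Lemma ev_or E F : ev P E -> ev P F -> ev P (fun w => E w \/ F w).
Proof.
move=> HE HF; have := ev_compl (ev_inter (ev_compl HE) (ev_compl HF)).
apply: ev_ext => w; tauto.
Qed.

Lemma ev_imp E F : ev P E -> ev P F -> ev P (fun w => E w -> F w).
Proof.
move=> HE HF; have := ev_or (ev_compl HE) HF.
apply: ev_ext => w; tauto.
Qed.

Lemma ev_forall_seq (T : eqType) (E : T -> Omega -> Prop) (s : seq T) :
  (forall x, ev P (E x)) -> ev P (fun w => forall x, x \in s -> E x w).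
Proof.
move=> HE; elim: s => [|a s IH].
  by apply: (ev_ext _ (ev_full P)) => w; split => // _ x; rewrite in_nil.
have := ev_and (HE a) IH; apply: ev_ext => w; split.
  by move=> [Ha Hs] x; rewrite inE => /orP [/eqP -> //|]; apply: Hs.
move=> H; split; first by apply: H; rewrite inE eqxx.
by move=> x Hx; apply: H; rewrite inE Hx orbT.
Qed.

Lemma ev_exists_seq (T : eqType) (E : T -> Omega -> Prop) (s : seq T) :
  (forall x, ev P (E x)) -> ev P (fun w => exists x, x \in s /\ E x w).
Proof.
move=> HE; elim: s => [|a s IH].
  by apply: (ev_ext _ ev_empty) => w; split => // -[x []]; rewrite in_nil.
have := ev_or (HE a) IH; apply: ev_ext => w; split.
  move=> [Ha|[x [Hx Ex]]]; first by exists a; rewrite inE eqxx.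
  by exists x; rewrite inE Hx orbT.
move=> [x []]; rewrite inE => /orP [/eqP -> |Hx] Ex; first by left.
by right; exists x.
Qed.

Lemma ev_forall (T : finType) (E : T -> Omega -> Prop) :
  (forall x, ev P (E x)) -> ev P (fun w => forall x, E x w).
Proof.
move=> HE; have := ev_forall_seq (enum T) HE; apply: ev_ext => w; split.
  by move=> H x; apply: H; rewrite mem_enum.
by move=> H x _.
Qed.

Lemma ev_exists (T : finType) (E : T -> Omega -> Prop) :
  (forall x, ev P (E x)) -> ev P (fun w => exists x, E x w).
Proof.
move=> HE; have := ev_exists_seq (enum T) HE; apply: ev_ext => w; split.
  by move=> [x [_ H]]; exists x.
by move=> [x H]; exists x; rewrite mem_enum.
Qed.

Lemma ev_setfun (T : finType) (F : Omega -> {set T}) :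
  (forall x, ev P (fun w => x \in F w)) ->
  forall Q : {set T} -> Prop, ev P (fun w => Q (F w)).
Proof.
move=> HF Q.
have : ev P (fun w => exists S : {set T}, Q S /\ forall x, (x \in F w) = (x \in S)).
  apply: ev_exists => S; apply: ev_and; first exact: ev_const.
  apply: ev_forall => x; case: (x \in S).
    by apply: ev_ext (HF x) => w; split => [->|->].
  by apply: ev_ext (ev_not (HF x)) => w; split => [/negP/negbTE|->].
apply: ev_ext => w; split.
  by move=> [S [HS HFS]]; have -> : F w = S by apply/setP => x; apply: HFS.
by move=> HQ; exists (F w).
Qed.

Lemma pr_empty : pr P (fun _ => False) = 0.
Proof.
have := pr_add ev_empty ev_empty (fun _ (f : False) _ => f).
rewrite (@prE (fun _ => False)); first lra.
move=> w; tauto.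
Qed.

Lemma pr_mono E F : ev P E -> ev P F -> (forall w, E w -> F w) -> pr P E <= pr P F.
Proof.
move=> HE HF HEF.
have H := pr_add HE (ev_and HF (ev_not HE)) (fun w a b => proj2 b a).
rewrite (@prE (F)) in H.
  have := pr_nonneg (ev_and HF (ev_not HE)); lra.
move=> w; split; first by case=> [/HEF|[]].
move=> Fw; case: (classic (E w)); [left|right] => //.
Qed.

Lemma pr_null_seq (T : eqType) (N : T -> Omega -> Prop) (s : seq T) :
  (forall x, ev P (N x)) -> (forall x, pr P (N x) = 0) ->
  pr P (fun w => exists x, x \in s /\ N x w) = 0.
Proof.
move=> HN H0; elim: s => [|a s IH].
  by rewrite (@prE (fun _ => False)) ?pr_empty // => w; split => // -[x []]; rewrite in_nil.
have HR := ev_exists_seq s HN.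
have Hd := pr_add (HN a) (ev_and HR (ev_not (HN a))) (fun w a b => proj2 b a).
rewrite (@prE (fun w => exists x, x \in a :: s /\ N x w)) in Hd; last first.
  move=> w; split.
    case=> [Na|[[x [Hx Nx]] _]]; first by exists a; rewrite inE eqxx.
    by exists x; rewrite inE Hx orbT.
  move=> [x []]; rewrite inE => /orP [/eqP -> |Hx] Nx; first by left.
  case: (classic (N a w)); [left|right] => //; split => //; by exists x.
rewrite Hd H0.
have := pr_mono (ev_and HR (ev_not (HN a))) HR (fun w => @proj1 _ _).
have := pr_nonneg (ev_and HR (ev_not (HN a))); lra.
Qed.

Lemma pr_sum_seq (T : eqType) (E : T -> Omega -> Prop) (s : seq T) :
  uniq s -> (forall x, ev P (E x)) ->
  (forall x y w, x != y -> E x w -> E y w -> False) ->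
  pr P (fun w => exists x, x \in s /\ E x w) = \big[Rplus/0]_(x <- s) pr P (E x).
Proof.
move=> + HE Hd; elim: s => [|a s IH].
  move=> _; rewrite big_nil.
  by rewrite (@prE (fun _ => False)) ?pr_empty // => w; split => // -[x []]; rewrite in_nil.
move=> /= /andP [Has Hus]; rewrite big_cons -IH //.
rewrite -(pr_add (HE a) (ev_exists_seq s HE)); last first.
  move=> w Ea [x [Hx Ex]]; apply: (Hd a x w) => //.
  by apply/eqP => Eax; rewrite Eax Hx in Has.
apply: pr_ext => w; split.
  move=> [x []]; rewrite inE => /orP [/eqP -> |Hx] Ex; first by left.
  by right; exists x.
case=> [Ea|[x [Hx Ex]]]; first by exists a; rewrite inE eqxx.
by exists x; rewrite inE Hx orbT.
Qed.

Lemma pr_sum (T : finType) (p : pred T) (E : T -> Omega -> Prop) :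
  (forall x, ev P (E x)) ->
  (forall x y w, x != y -> E x w -> E y w -> False) ->
  pr P (fun w => exists x, p x /\ E x w) = sumR p (fun x => pr P (E x)).
Proof.
move=> HE Hd; rewrite /sumR -big_filter -pr_sum_seq //; last first.
  by apply: filter_uniq; apply: index_enum_uniq.
apply: pr_ext => w; split.
  by move=> [x [px Ex]]; exists x; rewrite mem_filter px mem_index_enum.
by move=> [x []]; rewrite mem_filter => /andP [px _] Ex; exists x.
Qed.

Section G.
Variable G : Omega -> Prop.
Hypothesis evG : ev P G.
Hypothesis nullG : pr P (fun w => ~ G w) = 0.

Lemma pr_splitG E : ev P E -> pr P E = pr P (fun w => E w /\ G w).
Proof.
move=> HE.
have Hd := pr_add (ev_and HE evG) (ev_and HE (ev_not evG)) (fun w a b => proj2 b (proj2 a)).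
rewrite (@prE (E)) in Hd; last first.
  move=> w; split; first by case=> -[].
  by move=> Ew; case: (classic (G w)); [left|right].
have := pr_mono (ev_and HE (ev_not evG)) (ev_not evG) (fun w => @proj2 _ _).
have := pr_nonneg (ev_and HE (ev_not evG)); lra.
Qed.

Lemma pr_eqG E F : ev P E -> ev P F -> (forall w, G w -> (E w <-> F w)) ->
  pr P E = pr P F.
Proof.
move=> HE HF H; rewrite (pr_splitG HE) (pr_splitG HF).
apply: pr_ext => w; split => -[a b]; split => //; by apply/(H w b).
Qed.

Lemma pr_addG E F : ev P E -> ev P F -> (forall w, G w -> E w -> F w -> False) ->
  pr P (fun w => E w \/ F w) = pr P E + pr P F.
Proof.
move=> HE HF H.
rewrite (pr_splitG (ev_or HE HF)) (pr_splitG HE) (pr_splitG HF).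
rewrite -pr_add; [|exact: ev_and|exact: ev_and|]; last first.
  by move=> w [a b] [c d]; apply: (H w b).
apply: pr_ext => w; tauto.
Qed.
End G.
End Prob.


Definition rltb (x y : R) : bool := if Rlt_dec x y then true else false.
Lemma rltbP x y : reflect (x < y) (rltb x y).
Proof. rewrite /rltb; case: Rlt_dec => H; by constructor. Qed.
Lemma rlebP x y : reflect (x <= y) (Defs.Rleb x y).
Proof. rewrite /Defs.Rleb; case: Rle_dec => H; by constructor. Qed.

Lemma Rleb_trans : transitive Defs.Rleb.
Proof. move=> y x z /rlebP H1 /rlebP H2; apply/rlebP; lra. Qed.
Lemma Rleb_total : total Defs.Rleb.
Proof. move=> x y; case: (Rle_dec x y) => H; [rewrite (introT (rlebP _ _) H) //|].
by rewrite orbC (introT (rlebP _ _)) //; lra. Qed.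

Lemma sorted_nth_p (p : pred R) (Hp : forall y z, z <= y -> p y -> p z) s j :
  sorted Defs.Rleb s -> (j < size s)%N -> p (nth 0 s j) = (j < count p s)%N.
Proof.
elim: s j => [|a s IH] j //= Hs Hj.
have Hall : all (Defs.Rleb a) s by apply: order_path_min => //; exact: Rleb_trans.
have Hnp : ~~ p a -> count p s = 0%N.
  move=> Hna; apply/eqP; rewrite -leqn0 leqNgt -has_count; apply/hasP => -[y Hy py].
  move/allP: Hall => /(_ y Hy) /rlebP Hay.
  by move: Hna; rewrite (Hp _ _ Hay py).
case: j Hj => [|j] Hj /=.
  case pa: (p a) => //=; rewrite Hnp //; by rewrite pa.
case pa: (p a) => /=.
  rewrite IH //; exact: path_sorted Hs.
rewrite Hnp ?pa //=.
apply/negbTE/negP => pn.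
have Hin : nth 0 s j \in s by apply: mem_nth.
move/allP: Hall => /(_ _ Hin) /rlebP Hay.
by move: pa; rewrite (Hp _ _ Hay pn).
Qed.

Section Comb.
Variable n : nat.
Implicit Types (x : 'I_n -> R) (B : {set 'I_n}).

Definition rk x i := #|[set j | rltb (x j) (x i)]|.
Definition rke x i := #|[set j | Defs.Rleb (x j) (x i)]|.
Definition Sv x m := [set i | (n - m <= rk x i)%N].
Definition ost x k := nth 0 (sort Defs.Rleb [seq x i | i <- enum 'I_n]) k.-1.
Definition Qb x B := forall i j, i \notin B -> j \in B -> x i < x j.
Definition nt x := forall i j, i != j -> x i <> x j.

Lemma count_enum_set (T : finType) (p : pred T) : count p (enum T) = #|[set x | p x]|.
Proof.
rewrite cardsE cardE /enum_mem size_filter count_filter.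
by apply: eq_count => x; rewrite /= andbT.
Qed.

Lemma ost_count x k (p : pred R) (Hp : forall y z, z <= y -> p y -> p z) :
  (1 <= k <= n)%N -> p (ost x k) = (k <= #|[set i | p (x i)]|)%N.
Proof.
move=> /andP [k1 kn].
have /permPl Hperm := perm_sort Defs.Rleb [seq x i | i <- enum 'I_n].
rewrite /ost sorted_nth_p //; last first.
  by rewrite size_sort size_map size_enum_ord; case: k k1 kn.
  exact: sort_sorted Rleb_total _.
rewrite (permP Hperm) count_map -count_enum_set.
by case: k k1 kn.
Qed.

Lemma ost_lt x k y : (1 <= k <= n)%N ->
  (ost x k < y) <-> (k <= #|[set i | rltb (x i) y]|)%N.
Proof.
move=> Hk.
have Hp : forall a b, b <= a -> (fun z => rltb z y) a -> (fun z => rltb z y) b.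
  by move=> a b Hab /rltbP H; apply/rltbP; lra.
have H := @ost_count x k (fun z => rltb z y) Hp Hk; rewrite /= in H.
split => [Hl|Hc]; [rewrite -H; exact/rltbP | apply/rltbP; by rewrite H].
Qed.

Lemma ost_le x k y : (1 <= k <= n)%N ->
  (ost x k <= y) <-> (k <= #|[set i | Defs.Rleb (x i) y]|)%N.
Proof.
move=> Hk.
have Hp : forall a b, b <= a -> (fun z => Defs.Rleb z y) a -> (fun z => Defs.Rleb z y) b.
  by move=> a b Hab /rlebP H; apply/rlebP; lra.
have H := @ost_count x k (fun z => Defs.Rleb z y) Hp Hk; rewrite /= in H.
split => [Hl|Hc]; [rewrite -H; exact/rlebP | apply/rlebP; by rewrite H].
Qed.

Lemma ost_nonneg x k : (forall i, 0 <= x i) -> (1 <= k <= n)%N -> 0 <= ost x k.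
Proof.
move=> H0 Hk; apply: Rnot_lt_le => /(ost_lt _ _ Hk).
have -> : [set i | rltb (x i) 0] = set0.
  apply/setP => i; rewrite !inE; apply/negbTE/rltbP; have := H0 i; lra.
by rewrite cards0 leqn0 => /eqP k0; move: Hk; rewrite k0.
Qed.

Lemma rk_lt x i j : x j < x i -> (rk x j < rk x i)%N.
Proof.
move=> Hji; apply: proper_card; apply/properP; split.
  apply/subsetP => l; rewrite !inE => /rltbP H; apply/rltbP; lra.
exists j; rewrite !inE; [apply/rltbP => //|apply/rltbP; lra].
Qed.

Lemma rk_bound x i : (rk x i < n)%N.
Proof.
rewrite -[X in (_ < X)%N](card_ord n) -cardsT; apply: proper_card; apply/properP; split.
  by apply/subsetP => l; rewrite inE.
exists i; rewrite !inE //; apply/rltbP; lra.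
Qed.

Lemma Qb_Sv x B : Qb x B -> forall i, (i \in B) = (n - #|B| <= rk x i)%N.
Proof.
move=> HQ i; have HC : #|~: B| = (n - #|B|)%N by rewrite cardsCs setCK card_ord.
case iB: (i \in B).
  rewrite -HC; apply/esym/subset_leq_card/subsetP => l; rewrite !inE => lB.
  by apply/rltbP; apply: HQ.
apply/esym/negbTE; rewrite -ltnNge -HC; apply: proper_card; apply/properP; split.
  apply/subsetP => l; rewrite !inE => /rltbP H; apply/negP => lB.
  have := HQ _ _ (negbT iB) lB; lra.
exists i; rewrite !inE ?iB //; apply/rltbP; lra.
Qed.

Lemma Qb_uniq x B B' : Qb x B -> Qb x B' -> #|B| = #|B'| -> B = B'.
Proof.
move=> H H' Hc; apply/setP => i; by rewrite (Qb_Sv H) (Qb_Sv H') Hc.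
Qed.

Lemma nt_rke x i : nt x -> rke x i = (rk x i).+1.
Proof.
move=> Hnt; rewrite /rke.
have -> : [set j | Defs.Rleb (x j) (x i)] = i |: [set j | rltb (x j) (x i)].
  apply/setP => j; rewrite !inE; case: (eqVneq j i) => [->|ji] /=.
    by apply/rlebP; lra.
  have := Hnt _ _ ji => Hne.
  apply/idP/idP => [/rlebP H|/rltbP H]; [apply/rltbP|apply/rlebP]; lra.
rewrite cardsU1 inE; have : ~~ rltb (x i) (x i) by apply/rltbP; lra.
by move=> /negbTE ->.
Qed.

Lemma nt_rk_inj x : nt x -> forall i j, rk x i = rk x j -> i = j.
Proof.
move=> Hnt i j Hr; apply/eqP; apply/negP => /negP Hij.
have := Hnt _ _ Hij => Hne.
case: (Rtotal_order (x i) (x j)) => [H|[H|H]] //.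
  by have := rk_lt H; rewrite Hr ltnn.
by have := rk_lt H; rewrite Hr ltnn.
Qed.

Lemma card_ge_ord m : (m <= n)%N -> #|[set i : 'I_n | n - m <= i]%N| = m.
Proof.
move=> Hm.
have -> : [set i : 'I_n | n - m <= i]%N = ~: [set i : 'I_n | i < n - m]%N.
  by apply/setP => i; rewrite !inE leqNgt.
rewrite cardsCs setCK card_ord.
have -> : #|[set i : 'I_n | i < n - m]%N| = (n - m)%N.
  have winj : injective (widen_ord (leq_subr m n)).
    by move=> a b /(congr1 val) /= H; exact: val_inj.
  rewrite -[RHS](card_ord (n - m)) -(card_imset _ winj).
  rewrite cardsE; apply: eq_card => i; apply/idP/imsetP.
    by move=> H; exists (Ordinal (H : (i < n - m)%N)) => //; apply: val_inj.
  by move=> [j _ ->]; apply: (ltn_ord j).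
by rewrite subKn.
Qed.

Lemma nt_Sv x m : nt x -> (m <= n)%N -> Qb x (Sv x m) /\ #|Sv x m| = m.
Proof.
move=> Hnt Hm; split.
  move=> i j; rewrite !inE -ltnNge => Hi Hj.
  case: (Rtotal_order (x i) (x j)) => [H|[H|H]] //.
    have Hij : i = j by case: (eqVneq i j) => [//|D]; case: (Hnt _ _ D H).
    by move: Hi; rewrite Hij ltnNge Hj.
  by have := rk_lt H; rewrite ltnNge (leq_trans (ltnW Hi) Hj).
pose f (i : 'I_n) : 'I_n := Ordinal (rk_bound x i).
have finj : injective f by move=> i j /(congr1 val) /= /nt_rk_inj; apply.
transitivity #|f @^-1: [set i : 'I_n | n - m <= i]%N|; last by rewrite card_preimset // card_ge_ord.
by apply: eq_card => i; rewrite !inE.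
Qed.

End Comb.


Lemma survE (x t : R) : (Defs.Rleb x t == false) = rltb t x.
Proof.
case: (rlebP x t) => H; case: (rltbP t x) => H' //=; exfalso; lra.
Qed.

Lemma eps_exists n (x : 'I_n -> R) t :
  exists eps, 0 < eps /\ forall i, t < x i -> eps <= x i - t.
Proof.
suff: forall s : seq 'I_n, exists eps, 0 < eps /\ forall i, i \in s -> t < x i -> eps <= x i - t.
  by move=> /(_ (enum 'I_n)) [eps [He H]]; exists eps; split => // i; apply: H; rewrite mem_enum.
elim=> [|a s [e [He H]]].
  by exists 1; split => //; lra.
case: (Rlt_dec t (x a)) => Ha.
  exists (Rmin e (x a - t)); split; first by apply: Rmin_pos; lra.
  move=> i; rewrite inE => /orP [/eqP ->|Hi] Hti; first exact: Rmin_r.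
  by apply: Rle_trans (Rmin_l _ _) (H i Hi Hti).
exists e; split => // i; rewrite inE => /orP [/eqP ->|Hi] Hti; first by lra.
exact: H.
Qed.

Lemma life_char n (phi : {set 'I_n} -> bool) (x : 'I_n -> R) (Tw t : R) :
  (forall A B : {set 'I_n}, A \subset B -> phi A -> phi B) ->
  is_glb (fun s => 0 <= s /\ phi [set i | Defs.Rleb (x i) s == false] = false) Tw ->
  0 <= t ->
  (t < Tw <-> phi [set i | Defs.Rleb (x i) t == false]).
Proof.
move=> Hmono [Hlb Hglb] Ht; split.
  move=> Hlt; apply: NNPP => /negP/negbTE Hf.
  have := Hlb t (conj Ht Hf); lra.
move=> Hphi; have [eps [He Heps]] := eps_exists x t.
suff : t + eps <= Tw by lra.
apply: Hglb => s [Hs Hf].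
apply: Rnot_lt_le => Hlt.
have : phi [set i | Defs.Rleb (x i) s == false].
  apply: Hmono Hphi; apply/subsetP => i; rewrite !inE !survE => /rltbP Hi.
  apply/rltbP; have := Heps i Hi; lra.
by rewrite Hf.
Qed.

Lemma inc_excl n (B C : {set 'I_n}) : C \subset B ->
  \big[Rplus/0]_(A : {set 'I_n} | (A \subset B) && (C \subset A)) (-1)^(#|A| - #|C|) =
  if C == B then 1 else 0.
Proof.
move=> HCB; case: (eqVneq C B) => [->|CB].
  rewrite (big_pred1 B) ?subnn //= => A; rewrite /= eqEsubset //.
have [x xB xC] : exists2 x, x \in B & x \notin C.
  by have /properP [] : C \proper B by rewrite properEneq CB HCB.
rewrite (bigID (fun A : {set 'I_n} => x \in A)) /=.
rewrite (reindex_onto (fun A : {set 'I_n} => x |: A) (fun A : {set 'I_n} => A :\ x)); last first.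
  by move=> A /andP [_ xA]; apply: setD1K.
have -> : \big[Rplus/0]_(j : {set 'I_n} | ((x |: j \subset B) && (C \subset x |: j) && (x \in x |: j))
          && ((x |: j) :\ x == j)) (-1) ^ (#|x |: j| - #|C|)
   = \big[Rplus/0]_(j : {set 'I_n} | (j \subset B) && (C \subset j) && (x \notin j))
          (- (-1) ^ (#|j| - #|C|)).
  apply: eq_big => A.
    case xA: (x \in A) => /=.
      rewrite andbF; apply/negbTE; apply/negP => /andP [_ /eqP H].
      by move: xA; rewrite -H !inE eqxx.
    rewrite setU11 setU1K ?xA // eqxx !andbT.
    congr andb; first by rewrite subUset sub1set xB.
    apply/idP/idP => /subsetP H; apply/subsetP => c Hc; have := H c Hc.
      rewrite !inE => /orP [/eqP E|//]; by move: xC; rewrite -E Hc.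
    by rewrite !inE => ->; rewrite orbT.
  move=> /andP [/andP [/andP [_ HCA] _] /eqP xA].
  have xnA : x \notin A by rewrite -xA !inE eqxx.
  have HCA' : C \subset A.
    apply/subsetP => c Hc; move/subsetP: HCA => /(_ c Hc); rewrite !inE => /orP [/eqP E|//].
    by move: xC; rewrite -E Hc.
  rewrite cardsU1 xnA add1n subSn ?subset_leq_card //=; lra.
apply: (big_rec2 (fun a b => a + b = 0)); first lra.
move=> A a b _ H; have E : forall u v : R, u = v -> - u + a + (v + b) = a + b by move=> u v ->; lra.
by rewrite E.
Qed.

Lemma mobius_sum n (phi : {set 'I_n} -> bool) (B : {set 'I_n}) :
  sumR (fun A : {set 'I_n} => A \subset B) (mobius phi) = b2R (phi B).
Proof.
rewrite /sumR /mobius /sumR.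
rewrite (exchange_big_dep (fun C : {set 'I_n} => C \subset B)) /=; last first.
  by move=> A C HAB HCA; apply: subset_trans HCA HAB.
rewrite (eq_bigr (fun C : {set 'I_n} => (if C == B then 1 else 0) * b2R (phi C))); last first.
  by move=> C HC; rewrite -big_distrl /= inc_excl.
rewrite (bigD1 B) ?subxx //= eqxx big1; first lra.
by move=> C /andP [_ /negbTE ->]; lra.
Qed.


Section Main.
Variables (n : nat) (Omega : Type) (P : probSpace Omega) (X : 'I_n -> Omega -> R).
Hypothesis Hmeas : forall i j, ev P (fun w => X i w < X j w).
Hypothesis Hnoties : forall i j, i != j -> pr P (fun w => X i w = X j w) = 0.

Let xw w := fun i => X i w.

Lemma ev_eqX i j : ev P (fun w => X i w = X j w).
Proof.
apply: ev_ext (ev_and (ev_not (Hmeas i j)) (ev_not (Hmeas j i))) => w; split.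
  move=> [H1 H2]; lra.
move=> ->; split; lra.
Qed.

Lemma ev_rk i (Q : {set 'I_n} -> Prop) : ev P (fun w => Q [set l | rltb (X l w) (X i w)]).
Proof.
apply: ev_setfun => j; apply: ev_ext (Hmeas j i) => w; rewrite inE.
by split => [/rltbP|/rltbP].
Qed.

Lemma ev_rke i (Q : {set 'I_n} -> Prop) : ev P (fun w => Q [set l | Defs.Rleb (X l w) (X i w)]).
Proof.
apply: ev_setfun => j; apply: ev_ext (ev_not (Hmeas i j)) => w; rewrite inE.
by split => [H|/rlebP H]; [apply/rlebP; lra|lra].
Qed.

Lemma ev_Sv m (Q : {set 'I_n} -> Prop) : ev P (fun w => Q (Sv (xw w) m)).
Proof.
apply: ev_setfun => i; rewrite /Sv.
apply: ev_ext (ev_rk i (fun S => (n - m <= #|S|)%N)) => w; rewrite inE.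
by split => H; exact: H.
Qed.

Let G w := nt (xw w).

Lemma evG : ev P G.
Proof.
apply: ev_forall => i; apply: ev_forall => j.
apply: ev_imp; first exact: ev_const.
exact: ev_not (ev_eqX i j).
Qed.

Lemma nullG : pr P (fun w => ~ G w) = 0.
Proof.
pose N (p : 'I_n * 'I_n) w := p.1 != p.2 /\ X p.1 w = X p.2 w.
rewrite (@prE _ P (fun w => exists p, p \in enum {: 'I_n * 'I_n} /\ N p w)).
  apply: pr_null_seq => [p|[i j]].
    exact: ev_and (ev_const _ _) (ev_eqX _ _).
  rewrite /N /=; case: (eqVneq i j) => [->|Hij].
    by rewrite (@prE _ P (fun _ => False)) ?pr_empty // => w; split => // -[].
  rewrite -(Hnoties Hij); apply: pr_ext => w /=; by split => [[_ ->]|->].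
move=> w; split.
  move=> HG; apply: NNPP => Hn; apply: HG => i j Hij E; apply: Hn.
  by exists (i, j); rewrite mem_enum.
by move=> [[i j] [_ [Hij E]]] HG; exact: HG _ _ Hij E.
Qed.

Lemma key m (Q : pred {set 'I_n}) : (m <= n)%N ->
  pr P (fun w => Q (Sv (xw w) m)) = sumR (fun B : {set 'I_n} => (#|B| == m) && Q B) (qA P X).
Proof.
move=> Hm.
pose p := fun B : {set 'I_n} => (#|B| == m) && Q B.
pose E := fun (B : {set 'I_n}) w => p B /\ Qb (xw w) B.
have HE : forall B, ev P (E B).
  by move=> B; apply: ev_and (ev_const _ _) _; apply: ev_forall => i; apply: ev_forall => j;
    apply: ev_imp (ev_const _ _) _; apply: ev_imp (ev_const _ _) _; apply: Hmeas.
rewrite (@pr_eqG _ P G evG nullG _ (fun w => exists B, p B /\ E B w)).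
- rewrite pr_sum //.
    rewrite /sumR; apply: eq_bigr => B HB; apply: pr_ext => w; rewrite /E /qA; tauto.
  move=> B B' w HBB' [/andP [/eqP c1 _] Q1] [/andP [/eqP c2 _] Q2].
  by move/eqP: HBB'; apply; apply: Qb_uniq Q1 Q2 _; rewrite c1 c2.
- exact: (ev_Sv m (fun S => Q S)).
- by apply: ev_exists => B; apply: ev_and (ev_const _ _) (HE B).
move=> w Gw; split.
  move=> HQ; have [Hq Hc] := nt_Sv Gw Hm.
  by exists (Sv (xw w) m); have Hp : p (Sv (xw w) m) by rewrite /p Hc eqxx HQ.
move=> [B [/andP [/eqP Hc HQ] [_ HQb]]].
have -> : Sv (xw w) m = B by apply/setP => i; rewrite (Qb_Sv HQb) inE Hc.
exact: HQ.
Qed.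

Lemma C1 k w i : (1 <= k <= n)%N -> (ostat X k w < X i w <-> (k <= rk (xw w) i)%N).
Proof. move=> Hk; exact (ost_lt (xw w) (X i w) Hk). Qed.

Lemma C2 k w i : (1 <= k <= n)%N -> (ostat X k w <= X i w <-> (k <= rke (xw w) i)%N).
Proof. move=> Hk; exact (ost_le (xw w) (X i w) Hk). Qed.

Lemma part1 (A : {set 'I_n}) (k : nat) : (1 <= k <= n)%N ->
     pr P (fun w => eq_minA X A (ostat X k w) w) =
       sumR (fun B : {set 'I_n} => (A \subset B) && (#|B| == n - k + 1)%N)
            (fun B => qA P X B)
     - sumR (fun B : {set 'I_n} => (A \subset B) && (#|B| == n - k)%N)
            (fun B => qA P X B).
Proof.
move=> Hk.
pose E' w := (exists i, i \in A /\ ((k <= rke (xw w) i)%N /\ ~ (k <= rk (xw w) i)%N))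
             /\ (forall j, j \in A -> (k <= rke (xw w) j)%N).
have HEE : forall w, E' w <-> eq_minA X A (ostat X k w) w.
  move=> w; rewrite /E' /eq_minA; split.
    move=> [[i [iA [H1 H2]]] H3]; split.
      exists i; split => //; move/(C2 w i Hk): H1 => H1.
      have : ~ ostat X k w < X i w by move/(C1 w i Hk).
      lra.
    by move=> j jA; apply/(C2 w j Hk); apply: H3.
  move=> [[i [iA Hi]] H3]; split.
    exists i; split => //; split; first by apply/(C2 w i Hk); lra.
    by move/(C1 w i Hk); lra.
  by move=> j jA; apply/(C2 w j Hk); apply: H3.
have evE' : ev P E'.
  apply: ev_and.
    apply: ev_exists => i; apply: ev_and (ev_const _ _) _; apply: ev_and.
      exact: (ev_rke i (fun S => (k <= #|S|)%N)).
    exact: ev_not (ev_rk i (fun S => (k <= #|S|)%N)).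
  apply: ev_forall => j; apply: ev_imp (ev_const _ _) _.
  exact: (ev_rke j (fun S => (k <= #|S|)%N)).
have evE := ev_ext HEE evE'.
have Hk1 : (n - k + 1 <= n)%N by case/andP: Hk => *; lia.
have Hk0 : (n - k <= n)%N by lia.
have e1 : (n - (n - k + 1) = k.-1)%N by case/andP: Hk => *; lia.
have e0 : (n - (n - k) = k)%N by case/andP: Hk => *; lia.
have K1 := key (fun B : {set 'I_n} => A \subset B) Hk1.
have K0 := key (fun B : {set 'I_n} => A \subset B) Hk0.
have S1 : sumR (fun B : {set 'I_n} => (A \subset B) && (#|B| == n - k + 1)%N) (fun B => qA P X B)
   = sumR (fun B : {set 'I_n} => (#|B| == n - k + 1)%N && (A \subset B)) (qA P X).
  by rewrite /sumR; apply: eq_bigl => B; rewrite andbC.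
have S0 : sumR (fun B : {set 'I_n} => (A \subset B) && (#|B| == n - k)%N) (fun B => qA P X B)
   = sumR (fun B : {set 'I_n} => (#|B| == n - k)%N && (A \subset B)) (qA P X).
  by rewrite /sumR; apply: eq_bigl => B; rewrite andbC.
rewrite S1 S0 -K1 -K0.
have evQ0 := ev_Sv (n - k) (fun S => A \subset S).
rewrite (@pr_eqG _ P G evG nullG (fun w => A \subset Sv (xw w) (n - k + 1)) (fun w => eq_minA X A (ostat X k w) w \/ A \subset Sv (xw w) (n - k))).
- rewrite (pr_addG evG nullG evE evQ0); first lra.
  move=> w _ /HEE [[i [iA [_ Hi]]] _] /subsetP /(_ i iA).
  by rewrite inE e0.
- exact: (ev_Sv (n - k + 1) (fun S => A \subset S)).
- exact: ev_or evE evQ0.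
move=> w Gw; split.
  move=> /subsetP H1.
  case: (boolP (A \subset Sv (xw w) (n - k))) => [H0|]; first by right.
  move=> /subsetPn [i iA]; rewrite inE e0 => Hi; left; apply/HEE; split.
    exists i; split => //; split; last by apply/negP.
    by move: (H1 i iA); rewrite inE e1 (nt_rke _ Gw); case: (k) Hk.
  move=> j jA; move: (H1 j jA); rewrite inE e1 (nt_rke _ Gw); by case: (k) Hk.
case.
  move=> /HEE [_ H3]; apply/subsetP => j jA; rewrite inE e1.
  by move: (H3 j jA); rewrite (nt_rke _ Gw); case: (k) Hk.
move=> /subsetP H0; apply/subsetP => j jA; move: (H0 j jA); rewrite !inE e1 e0.
by case: (k) Hk => // k' _ /ltnW.
Qed.


Hypothesis Hnonneg : forall i w, 0 <= X i w.

Lemma lt_minA_Sv (A : {set 'I_n}) k w : (1 <= k <= n)%N ->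
  lt_minA X A (ostat X k w) w <-> A \subset Sv (xw w) (n - k).
Proof.
move=> Hk; have e0 : (n - (n - k) = k)%N by case/andP: Hk => *; lia.
rewrite /lt_minA; split.
  by move=> H; apply/subsetP => i iA; rewrite inE e0; apply/(C1 w i Hk); apply: H.
by move=> /subsetP H i iA; apply/(C1 w i Hk); move: (H i iA); rewrite inE e0.
Qed.

Lemma part2 (phi : {set 'I_n} -> bool) (T : Omega -> R) :
     semicoherent phi -> is_lifetime phi X T ->
     forall k : nat, (1 <= k <= n)%N ->
       pr P (fun w => ostat X k w < T w) =
         sumR (fun A : {set 'I_n} => #|A| == (n - k)%N)
              (fun A => qA P X A * b2R (phi A))
       /\
       pr P (fun w => ostat X k w < T w) =
         sumR (fun A : {set 'I_n} => true)
              (fun A => mobius phi A * pr P (fun w => lt_minA X A (ostat X k w) w)).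
Proof.
move=> [Hmono _] Hlife k Hk.
have e0 : (n - (n - k) = k)%N by case/andP: Hk => *; lia.
have Hk0 : (n - k <= n)%N by lia.
have HT : pr P (fun w => ostat X k w < T w) = pr P (fun w => phi (Sv (xw w) (n - k))).
  apply: pr_ext => w.
  have Ht : 0 <= ostat X k w by apply: (@ost_nonneg n (xw w)) => // i; apply: Hnonneg.
  rewrite (life_char Hmono (Hlife w) Ht).
  have -> : [set i | Defs.Rleb (X i w) (ostat X k w) == false] = Sv (xw w) (n - k).
    apply/setP => i; rewrite !inE survE e0.
    by apply/idP/idP => [/rltbP/(C1 w i Hk)|/(C1 w i Hk)/rltbP].
  by [].
have HA : sumR (fun A : {set 'I_n} => #|A| == (n - k)%N) (fun A => qA P X A * b2R (phi A))
   = pr P (fun w => phi (Sv (xw w) (n - k))).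
  rewrite (key (fun B : {set 'I_n} => phi B) Hk0) /sumR big_mkcondr /=.
  by apply: eq_bigr => B _; rewrite /b2R; case: (phi B); lra.
split; first by rewrite HT HA.
rewrite HT -HA; symmetry.
rewrite /sumR.
rewrite (eq_bigr (fun A : {set 'I_n} => mobius phi A *
   \big[Rplus/0]_(B : {set 'I_n} | (#|B| == n - k)%N && (A \subset B)) (qA P X B))); last first.
  move=> A _; have K := key (fun B : {set 'I_n} => A \subset B) Hk0; rewrite /sumR in K.
  rewrite -K; congr (_ * _).
  by apply: pr_ext => w; apply: lt_minA_Sv.
rewrite (eq_bigr (fun A : {set 'I_n} => \big[Rplus/0]_(B : {set 'I_n} | (#|B| == n - k)%N && (A \subset B))
                                 (mobius phi A * qA P X B))); last first.
  by move=> A _; rewrite big_distrr.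
rewrite (exchange_big_dep (fun B : {set 'I_n} => (#|B| == n - k)%N)) /=; last first.
  by move=> A B _ /andP [].
apply: eq_bigr => B HB.
rewrite -big_distrl /= -(mobius_sum phi B) /sumR.
rewrite (eq_bigl (fun A : {set 'I_n} => A \subset B)); last by move=> A; rewrite HB.
exact: Rmult_comm.
Qed.

End Main.



Theorem mainTheorem6 (n : nat) (Omega : Type) (P : probSpace Omega)
    (X : 'I_n -> Omega -> R)
    (Hmeas : forall i j, ev P (fun w => X i w < X j w))
    (Hnonneg : forall i w, 0 <= X i w)
    (Hnoties : forall i j, i != j -> pr P (fun w => X i w = X j w) = 0) :
  (forall (A : {set 'I_n}) (k : nat), (1 <= k <= n)%N ->
     pr P (fun w => eq_minA X A (ostat X k w) w) =
       sumR (fun B : {set 'I_n} => (A \subset B) && (#|B| == n - k + 1)%N)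
            (fun B => qA P X B)
     - sumR (fun B : {set 'I_n} => (A \subset B) && (#|B| == n - k)%N)
            (fun B => qA P X B))
  /\
  (forall (phi : {set 'I_n} -> bool) (T : Omega -> R),
     semicoherent phi -> is_lifetime phi X T ->
     forall k : nat, (1 <= k <= n)%N ->
       pr P (fun w => ostat X k w < T w) =
         sumR (fun A : {set 'I_n} => #|A| == (n - k)%N)
              (fun A => qA P X A * b2R (phi A))
       /\
       pr P (fun w => ostat X k w < T w) =
         sumR (fun A : {set 'I_n} => true)
              (fun A => mobius phi A * pr P (fun w => lt_minA X A (ostat X k w) w))).
Proof.
split.
  by move=> A k Hk; exact: (part1 Hmeas Hnoties).
by move=> phi T Hsc Hl k Hk; exact: (part2 Hmeas Hnoties Hnonneg Hsc Hl).
Qed.
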